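(* Let $k\geq1$ and let $I_1,\ldots,I_n$ be a partition of $\{1,\ldots,k\}$. Let $a=(a_1,\ldots,a_k)\in\mathbb{R}^k$ and define $b=(b_1,\ldots,b_n)\in\mathbb{R}^n$ by $b_i=\sum_{j\in I_i}a_j$. If $a\in\Delta_k$ then $b\in\Delta_n$.
   Context: For $m\geq1$, $\Delta_m$ is the set of $(a_1,\ldots,a_m)\in[0,1]^m$ with $\sum_{j=1}^ma_j\leq1$ and $a_i+\sum_{j=1}^ma_j\geq1$ for every $i\in\{1,\ldots,m\}$. *)

(* Defs.v *)
From mathcomp Require Import all_boot all_order all_algebra.
Set Implicit Arguments. Unset Strict Implicit. Unset Printing Implicit Defensive.
Import Order.TTheory GRing.Theory Num.Theory.
Local Open Scope ring_scope.

Definition Delta (R : realFieldType) (m : nat) (a : 'I_m -> R) : Prop :=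
  (forall i, 0 <= a i <= 1) /\
  \sum_(j < m) a j <= 1 /\
  (forall i, 1 <= a i + \sum_(j < m) a j).

Definition is_indexed_partition (k n : nat) (I : 'I_n -> {set 'I_k}) : Prop :=
  (forall i, I i != set0) /\
  (forall i i', i != i' -> [disjoint I i & I i']) /\
  (forall j : 'I_k, exists i, j \in I i).

(* Main.v *)
Require Import Defs.
From mathcomp Require Import all_boot all_order all_algebra.
Import Order.TTheory GRing.Theory Num.Theory.
Local Open Scope ring_scope.

Theorem lemma1p3 (R : realFieldType) (k n : nat) (hk : (1 <= k)%N)
  (I : 'I_n -> {set 'I_k}) (hI : is_indexed_partition I)
  (a : 'I_k -> R) :
  Delta a -> Delta (fun i : 'I_n => \sum_(j in I i) a j).
Proof.
case: hI => [hne [hdis hcov]] [ha [hs hl]].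
have hsum : \sum_(i < n) \sum_(j in I i) a j = \sum_(j < k) a j.
  transitivity (\sum_(i < n) \sum_(j < k) ((j \in I i)%:R * a j)).
    apply: eq_bigr => i _; rewrite big_mkcond /=; apply: eq_bigr => j _.
    by case: (j \in I i); rewrite ?mul1r ?mul0r.
  rewrite exchange_big /=; apply: eq_bigr => j _.
  rewrite -mulr_suml; case: (hcov j) => i0 hi0.
  rewrite (bigD1 i0) //= hi0 big1 ?addr0 ?mul1r // => i hi.
  have := hdis i i0 hi; rewrite disjoint_sym => /disjointFr/(_ hi0) ->.
  by [].
have hb0 : forall i, 0 <= \sum_(j in I i) a j.
  by move=> i; apply: sumr_ge0 => j _; case/andP: (ha j).
have hbS : forall i, \sum_(j in I i) a j <= \sum_(i < n) \sum_(j in I i) a j.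
  move=> i; rewrite (bigD1 i) //= lerDl; apply: sumr_ge0 => l _; exact: hb0.
split; last split.
- move=> i; rewrite hb0 /=; apply: le_trans (hbS i) _; by rewrite hsum.
- by rewrite hsum.
- move=> i; rewrite hsum.
  case: (set_0Vmem (I i)) => [E|[j hj]]; first by move: (hne i); rewrite E eqxx.
  apply: le_trans (hl j) _; rewrite lerD2r.
  rewrite (bigD1 j) //= lerDl; apply: sumr_ge0 => l _; by case/andP: (ha l).
Qed.
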